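(* For every integer $n\geq 0$, \[ b_{n}^{(2)}(x)=\sum_{l=0}^{n}\binom{n}{l}\frac{B_{l}\,b_{n-l}(x)}{l+1}. \]
   Context: For $k\in\mathbb{Z}$, the polylogarithm is $Li_k(x)=\sum_{n=1}^{\infty}\frac{x^n}{n^k}$. The poly-Bernoulli polynomials of the second kind $b_n^{(k)}(x)$ are defined by the generating function \[ \frac{Li_{k}(1-e^{-t})}{\log(1+t)}(1+t)^{x}=\sum_{n=0}^{\infty}b_{n}^{(k)}(x)\frac{t^{n}}{n!}. \] The Bernoulli polynomials of the second kind $b_n(x)$ are defined by $\frac{t}{\log(1+t)}(1+t)^x=\sum_{n=0}^{\infty}b_n(x)\frac{t^n}{n!}$. The Bernoulli numbers $B_n$ are defined by $\frac{t}{e^t-1}=\sum_{n=0}^{\infty}B_n\frac{t^n}{n!}$. *)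

(* Defs.v *)
(* Generating functions are read as FORMAL power series in t
   over a characteristic-0 number field R; a series is its coefficient
   sequence nat -> R. *)
From mathcomp Require Import all_boot all_order all_algebra.
Set Implicit Arguments. Unset Strict Implicit. Unset Printing Implicit Defensive.
Import Order.TTheory GRing.Theory Num.Theory.
Local Open Scope ring_scope.

Section FPS.
Variable R : numFieldType.

Definition fps := nat -> R.

Definition fone : fps := fun n => (n == 0%N)%:R.

Definition fmul (a b : fps) : fps :=
  fun n => \sum_(i < n.+1) a i * b (n - i)%N.

Fixpoint fpow (a : fps) (m : nat) : fps :=
  match m with
  | 0 => fone
  | m'.+1 => fmul a (fpow a m')
  end.

(* composition f(u(t)), meaningful when u 0 = 0 *)
Definition fcomp (f u : fps) : fps :=
  fun n => \sum_(m < n.+1) f m * fpow u m n.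

(* division by t (for series with zero constant term) *)
Definition fshift (a : fps) : fps := fun n => a n.+1.

(* multiplicative inverse of a series with a 0 != 0 *)
Fixpoint finv_seq (a : fps) (n : nat) : seq R :=
  match n with
  | 0 => [:: (a 0%N)^-1]
  | n'.+1 => let s := finv_seq a n' in
      rcons s (- (a 0%N)^-1 * \sum_(i < n'.+1) a i.+1 * nth 0 s (n' - i)%N)
  end.

Definition finv (a : fps) : fps := fun n => nth 0 (finv_seq a n) n.

(* Li_k(u) = sum_{m>=1} u^m / m^k, k : int *)
Definition Li_ser (k : int) : fps :=
  fun m => if m == 0%N then 0 else ((m%:R : R) ^ k)^-1.

Definition one_minus_exp_neg : fps :=
  fun n => if n == 0%N then 0 else - ((-1) ^+ n) / (n`!)%:R.

Definition exp_minus_one : fps :=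
  fun n => if n == 0%N then 0 else 1 / (n`!)%:R.

Definition log1p_ser : fps :=
  fun n => if n == 0%N then 0 else - ((-1) ^+ n) / n%:R.

(* (1+t)^x = sum_n binom(x,n) t^n *)
Definition binom_ser (x : R) : fps :=
  fun n => (\prod_(i < n) (x - i%:R)) / (n`!)%:R.

(* Li_k(1-e^{-t}) / log(1+t) * (1+t)^x *)
Definition polyBer2_gf (k : int) (x : R) : fps :=
  fmul (fmul (fshift (fcomp (Li_ser k) one_minus_exp_neg))
             (finv (fshift log1p_ser)))
       (binom_ser x).

Definition polyBer2 (k : int) (n : nat) (x : R) : R :=
  (n`!)%:R * polyBer2_gf k x n.

(* Bernoulli polynomials of the second kind: t/log(1+t) (1+t)^x *)
Definition Ber2 (n : nat) (x : R) : R :=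
  (n`!)%:R * fmul (finv (fshift log1p_ser)) (binom_ser x) n.

(* Bernoulli numbers: t/(e^t-1) *)
Definition Bernoulli (n : nat) : R :=
  (n`!)%:R * finv (fshift exp_minus_one) n.

End FPS.

(* Main.v *)
Require Import Defs.
From mathcomp Require Import all_boot all_order all_algebra.
From mathcomp Require Import zify ring.
Set Implicit Arguments. Unset Strict Implicit. Unset Printing Implicit Defensive.
Import Order.TTheory GRing.Theory Num.Theory.
Local Open Scope ring_scope.
Section S.
Variable R : numFieldType.
Implicit Types (p q r : {poly R}) (a b : fps R).

Definition eqm N p q := forall i, (i < N)%N -> p`_i = q`_i.

Lemma eqm_refl N p : eqm N p p. Proof. by []. Qed.
Lemma eqm_sym N p q : eqm N p q -> eqm N q p. Proof. by move=> h i hi; rewrite h. Qed.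
Lemma eqm_trans N p q r : eqm N p q -> eqm N q r -> eqm N p r.
Proof. by move=> h1 h2 i hi; rewrite h1 ?h2. Qed.
Lemma eqm_le M N p q : (M <= N)%N -> eqm N p q -> eqm M p q.
Proof. by move=> hMN h i hi; apply: h; apply: leq_trans hMN. Qed.
Lemma eqm_add N p p' q q' : eqm N p p' -> eqm N q q' -> eqm N (p + q) (p' + q').
Proof. by move=> h1 h2 i hi; rewrite !coefD h1 ?h2. Qed.
Lemma eqm_sub N p p' q q' : eqm N p p' -> eqm N q q' -> eqm N (p - q) (p' - q').
Proof. by move=> h1 h2 i hi; rewrite !coefB h1 ?h2. Qed.
Lemma eqm_mul N p p' q q' : eqm N p p' -> eqm N q q' -> eqm N (p * q) (p' * q').
Proof.
move=> h1 h2 i hi; rewrite !coefM; apply: eq_bigr => j _.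
have hj : (j < N)%N by apply: leq_ltn_trans hi; rewrite -ltnS.
rewrite h1 // h2 //; apply: leq_ltn_trans hi; exact: leq_subr.
Qed.
Lemma eqm_deriv N p q : eqm N.+1 p q -> eqm N p^`() q^`().
Proof. by move=> h i hi; rewrite 2!coef_deriv h. Qed.

Lemma natr_neq0 n : (n.+1%:R : R) != 0.
Proof. by rewrite pnatr_eq0. Qed.

Lemma eqm_integ N p q : eqm N p^`() q^`() -> p`_0 = q`_0 -> eqm N.+1 p q.
Proof.
move=> h h0 [|i] hi; first exact: h0.
rewrite ltnS in hi.
have := h i hi; rewrite 2!coef_deriv => /eqP.
by rewrite -subr_eq0 -mulrnBl mulrn_eq0 /= subr_eq0 => /eqP.
Qed.

Definition P N a : {poly R} := \poly_(i < N) a i.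

Lemma coefP N a i : (i < N)%N -> (P N a)`_i = a i.
Proof. by move=> h; rewrite coef_poly h. Qed.

Lemma fmulP N a b i : (i < N)%N -> fmul a b i = (P N a * P N b)`_i.
Proof.
move=> hi; rewrite coefM /fmul; apply: eq_bigr => j _.
have hj : (j < N)%N by apply: leq_ltn_trans hi; rewrite -ltnS.
rewrite !coefP //; apply: leq_ltn_trans hi; exact: leq_subr.
Qed.

Lemma PfmulE N a b : eqm N (P N (fmul a b)) (P N a * P N b).
Proof. by move=> i hi; rewrite coefP // (fmulP _ _ hi). Qed.

Lemma PfpowE N a m : eqm N (P N (fpow a m)) (P N a ^+ m).
Proof.
elim: m => [|m IH] /=.
  by move=> i hi; rewrite coefP // expr0 coef1.
rewrite exprS; exact: (eqm_trans (@PfmulE N a (fpow a m)) (eqm_mul (@eqm_refl N _) IH)).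
Qed.

Lemma expX0 p m i : p`_0 = 0 -> (i < m)%N -> (p ^+ m)`_i = 0.
Proof.
move=> h0; elim: m i => [|m IH] i //= hi.
rewrite exprS coefM big1 // => -[[|j] hj] _ /=; first by rewrite h0 mul0r.
rewrite IH ?mulr0 //; rewrite ltnS in hj hi.
lia.
Qed.

Lemma PfcompE N f u : u 0%N = 0 ->
  eqm N (P N (fcomp f u)) (\sum_(m < N) f m *: P N u ^+ m).
Proof.
move=> u0 i hi; rewrite coefP // coef_sum /fcomp.
have U0 : (P N u)`_0 = 0 by rewrite coefP ?u0 //; apply: leq_ltn_trans hi.
rewrite (big_ord_widen N (fun m => f m * fpow u m i) hi) big_mkcond.
apply: eq_bigr => m _; rewrite coefZ; case: ifP => hm.
  by rewrite -(PfpowE _ _ hi) coefP.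
by rewrite expX0 ?mulr0 // ltnNge -ltnS hm.
Qed.

Lemma finv_seq_size a n : size (finv_seq a n) = n.+1.
Proof. by elim: n => //= n IH; rewrite size_rcons IH. Qed.

Lemma finv_seq_nth a n i : (i <= n)%N -> nth 0 (finv_seq a n) i = Defs.finv a i.
Proof.
elim: n => [|n IH] hi; first by case: i hi.
rewrite /= nth_rcons finv_seq_size.
case: ltngtP hi => // [h _|-> _]; first by apply: IH.
by rewrite /Defs.finv /= nth_rcons finv_seq_size ltnn eqxx.
Qed.

Lemma finvS a n : Defs.finv a n.+1 =
  - (a 0%N)^-1 * \sum_(i < n.+1) a i.+1 * Defs.finv a (n - i)%N.
Proof.
rewrite {1}/Defs.finv /= nth_rcons finv_seq_size ltnn eqxx; congr (_ * _).
by apply: eq_bigr => i _; rewrite finv_seq_nth // leq_subr.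
Qed.

Lemma fmul_finv a n : a 0%N != 0 -> fmul a (Defs.finv a) n = fone R n.
Proof.
move=> a0; case: n => [|n]; rewrite /fmul /fone.
  by rewrite big_ord1 /Defs.finv /= mulfV.
rewrite big_ord_recl /= subn0 finvS mulrA mulrN mulfV // mulN1r.
by rewrite addrC (eq_bigr (fun i : 'I_n.+1 => a i.+1 * Defs.finv a (n - i)%N)) ?subrr.
Qed.
End S.
Section T.
Variable R : numFieldType.
Implicit Types (p q r : {poly R}) (a b : fps R).

Lemma fact_neq0 i : ((i`!)%:R : R) != 0.
Proof. by rewrite pnatr_eq0 -lt0n fact_gt0. Qed.

Lemma factSK (x : R) i : x / ((i.+1)`!)%:R *+ i.+1 = x / (i`!)%:R.
Proof.
rewrite -mulr_natr factS natrM invfM mulrA mulrAC -(mulrA x) mulVf ?mulr1 //.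
exact: natr_neq0.
Qed.

Lemma eqmX N p q : eqm N.+1 ('X * p) ('X * q) -> eqm N p q.
Proof. by move=> h i hi; have := h i.+1 hi; rewrite !coefXM. Qed.

Lemma eqm_opp N p q : eqm N p q -> eqm N (- p) (- q).
Proof. by move=> h i hi; rewrite !coefN h. Qed.

Lemma LiP k m : Li_ser R (Posz k) m = if m == 0%N then 0 else ((m%:R)^+k)^-1.
Proof. by []. Qed.

Variable N : nat.
Let K := N.+2.
Definition ome := one_minus_exp_neg R.
Definition U := P K ome.
Definition E := \poly_(i < K) ((i`!)%:R : R)^-1.
Definition S := P K (fshift (exp_minus_one R)).
Definition Iv := P K (Defs.finv (fshift (exp_minus_one R))).
Definition G := \sum_(m < K) Li_ser R 1 m *: U ^+ m.
Definition F := \sum_(m < K) Li_ser R 2 m *: U ^+ m.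

Lemma U0 : U`_0 = 0.
Proof. by rewrite /U (coefP ome (isT : (0 < K)%N)). Qed.

Lemma dU : eqm N.+1 U^`() (1 - U).
Proof.
move=> i hi; rewrite coef_deriv coefB coef1 /U (coefP ome (hi : (i.+1 < K)%N)).
rewrite (coefP ome (ltnW hi : (i < K)%N)).
rewrite /ome /one_minus_exp_neg /= factSK exprS mulN1r opprK.
case: i {hi} => [|i] /=; first by rewrite expr0 subr0 mul1r invr1.
by rewrite sub0r mulNr opprK.
Qed.

Lemma dE : eqm N.+1 E^`() E.
Proof.
move=> i hi; rewrite coef_deriv !coef_poly ltnS hi ltnS ltnW //.
by rewrite -[X in X *+ _]mul1r factSK mul1r.
Qed.

Lemma E1U : eqm K (E * (1 - U)) 1.
Proof.
refine (eqm_integ _ _); last first.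
  by rewrite coef0M coefB coef1 U0 coef_poly /= subr0 invr1 mulr1.
rewrite derivM derivB -polyC1 !derivC sub0r polyC1.
have h : eqm N.+1 (E^`() * (1 - U) + E * - U^`()) (E * (1 - U) - E * (1 - U)).
  rewrite -[- (E * (1 - U))]mulrN; exact (eqm_add (eqm_mul dE (@eqm_refl _ _ _)) (eqm_mul (@eqm_refl _ _ _) (eqm_opp dU))).
by rewrite subrr in h.
Qed.

Lemma dG : G^`() = U^`() * \sum_(m < N.+1) U ^+ m.
Proof.
rewrite /G raddf_sum big_ord_recl /= LiP /= scale0r derivC add0r mulr_sumr.
apply: eq_bigr => m _; rewrite derivZ deriv_exp /= LiP /= expr1.
by rewrite -scaler_nat scalerA mulVf ?natr_neq0 // scale1r.
Qed.

Lemma GX : eqm K G 'X.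
Proof.
refine (eqm_integ _ _); last first.
  rewrite coefX coef_sum big1 // => -[[|m] hm] _; rewrite coefZ LiP /=.
    by rewrite mul0r.
  by rewrite (expX0 U0 (isT : (0 < m.+1)%N)) mulr0.
rewrite dG derivX.
have h : eqm N.+1 (U^`() * \sum_(m < N.+1) U ^+ m) ((1 - U) * \sum_(m < N.+1) U ^+ m).
  exact (eqm_mul dU (@eqm_refl _ _ _)).
have e : (1 - U) * \sum_(m < N.+1) U ^+ m = 1 - U ^+ N.+1.
  rewrite -(expr1n _ N.+1) subrXX /= expr1n; congr (_ * _).
  by apply: eq_bigr => i _; rewrite expr1n mul1r.
rewrite e in h; refine (eqm_trans h _) => i hi.
by rewrite coefB (expX0 U0 hi) subr0.
Qed.

Lemma UdF : U * F^`() = U^`() * G.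
Proof.
rewrite /F /G raddf_sum !mulr_sumr; apply: eq_bigr => -[[|k] hk] _ /=.
  by rewrite !LiP /= !scale0r raddf0 !mulr0.
rewrite derivZ deriv_exp /= !LiP /= expr1 -scaler_nat.
rewrite -!scalerAr scalerA; congr (_ *: _).
  change ((k.+1%:R : R) ^- 2 * k.+1%:R = k.+1%:R^-1); rewrite expr2 invfM -mulrA mulVf ?mulr1 //.
  exact: natr_neq0.
by rewrite mulrCA exprS.
Qed.

Lemma EU : eqm K (E * U) (E - 1).
Proof.
have h := eqm_sub (@eqm_refl _ K E) E1U.
by rewrite mulrBr mulr1 opprB addrCA subrr addr0 in h.
Qed.

Lemma EXS : eqm K (E - 1) ('X * S).
Proof.
move=> i hi; rewrite coefB coefXM coef1 /E coef_poly hi.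
case: i hi => [|i] hi /=; first by rewrite invr1 subrr.
rewrite subr0 (coefP _ (ltnW hi : (i < K)%N)) /fshift /exp_minus_one /=.
by rewrite div1r.
Qed.

Lemma FS : eqm N (F^`() * S) 1.
Proof.
apply: eqmX; rewrite mulr1 mulrCA.
have h1 : eqm N.+1 (F^`() * ('X * S)) (F^`() * (E * U)).
  exact (eqm_mul (@eqm_refl _ _ _) (eqm_le (leqnSn _) (eqm_sym (eqm_trans EU EXS)))).
refine (eqm_trans h1 _).
rewrite (_ : F^`() * (E * U) = U * F^`() * E); last by rewrite mulrC (mulrC E U) -!mulrA (mulrC E).
rewrite UdF.
have h2 : eqm N.+1 (U^`() * G * E) ((1 - U) * 'X * E).
  exact (eqm_mul (eqm_mul dU (eqm_le (leqnSn _) GX)) (@eqm_refl _ _ _)).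
refine (eqm_trans h2 _).
rewrite mulrC mulrA.
have h3 := eqm_mul (eqm_le (leqnSn _) E1U) (@eqm_refl _ N.+1 'X).
by rewrite mul1r in h3.
Qed.

Lemma SIv : eqm K (S * Iv) 1.
Proof.
move=> i hi; rewrite -(fmulP _ _ hi) fmul_finv.
  by rewrite -polyC1 coefC /fone; case: i {hi}.
by rewrite /fshift /exp_minus_one /= div1r invr1 oner_neq0.
Qed.

Lemma dFIv : eqm N F^`() Iv.
Proof.
have h := eqm_mul (@eqm_refl _ N F^`()) (eqm_le (leqW (leqnSn _)) SIv).
rewrite mulr1 mulrA in h; refine (eqm_trans (eqm_sym h) _).
have h2 := eqm_mul FS (@eqm_refl _ N Iv).
by rewrite mul1r in h2.
Qed.
End T.
Lemma Dcoef (R : numFieldType) l :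
  fshift (fcomp (Li_ser R 2) (one_minus_exp_neg R)) l =
  Defs.finv (fshift (exp_minus_one R)) l / (l.+1)%:R.
Proof.
have hK : (l.+1 < l.+3)%N by [].
have u0 : one_minus_exp_neg R 0%N = 0 by [].
have hl3 : (l < l.+3)%N by lia.
rewrite {1}/fshift -(coefP _ hK) (PfcompE (Li_ser R 2) u0 hK).
have e := @dFIv R l.+1 l (ltnSn l).
rewrite coef_deriv /Iv (coefP _ hl3) in e.
rewrite -e -[X in X / _]mulr_natr mulfK //; exact: natr_neq0.
Qed.

Lemma fmul_assoc (R : numFieldType) (a b c : fps R) n :
  fmul (fmul a b) c n = fmul a (fmul b c) n.
Proof.
have hn : (n < n.+1)%N by [].
rewrite (fmulP _ _ hn) (fmulP _ _ hn).
rewrite (eqm_mul (PfmulE a b) (@eqm_refl _ _ _) hn).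
by rewrite (eqm_mul (@eqm_refl _ _ _) (PfmulE b c) hn) mulrA.
Qed.

Unset Implicit Arguments.
Theorem theorem1 (R : numFieldType) (x : R) (n : nat) :
  polyBer2 2%:Z n x =
  \sum_(l < n.+1) 'C(n, l)%:R * (Bernoulli R l * Ber2 (n - l)%N x) / (l.+1)%:R.
Proof.
rewrite /polyBer2 /polyBer2_gf fmul_assoc /fmul mulr_sumr.
apply: eq_bigr => l _; rewrite Dcoef /Bernoulli /Ber2 /fmul.
set A := Defs.finv _ l; set B := \sum_(i < _) _.
have hl : (l <= n)%N by rewrite -ltnS.
rewrite -(bin_fact hl) !natrM.
have f1 := fact_neq0 R l; have f2 := fact_neq0 R (n - l).
ring.
Qed.
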